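(* Let $G=(V,E)$ be a graph with $|V|=n$ vertices, and let $P_{\text{match}}(G)\subset\mathbb{R}^E$ be its matching polytope. Then \[\mathrm{xc}\big(P_{\text{match}}(G)\big)\leq \ln(n)\cdot n^3\cdot 1.5^n .\]
   Context: The matching polytope of $G=(V,E)$ is $P_{\text{match}}(G)=\mathrm{conv}\{\chi_M : M\subset E \text{ a matching of } G\}\subset\mathbb{R}^E$, where $\chi_M$ is the characteristic vector of $M$. For a polytope $P$, write $|P|$ for its number of facets (the minimal number of inequalities in a description $\{x: Ax\le b, Cx=e\}$ of $P$). An affine extension of $P\subset\mathbb{R}^d$ is a polyhedron $Q\subset\mathbb{R}^{d'}$ together with an affine map $\pi$ with $\pi(Q)=P$. The extension complexity is $\mathrm{xc}(P)=\min\{|Q| : Q \text{ an affine extension of } P\}$. *)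

(* Defs.v *)
From HB Require Import structures.
From mathcomp Require Import all_boot all_order all_algebra.
From mathcomp Require Import boolp classical_sets reals exp.
Set Implicit Arguments. Unset Strict Implicit. Unset Printing Implicit Defensive.
Import Order.TTheory GRing.Theory Num.Theory.
Local Open Scope ring_scope.
Local Open Scope classical_set_scope.

Section Defs.
Variable R : realType.

Definition is_matching (T : finType) (E : {set {set T}}) (M : {set {set T}}) : bool :=
  (M \subset E) &&
  [forall S1 in M, forall S2 in M, (S1 != S2) ==> [disjoint S1 & S2]].

(* R^E is identified with column vectors of size #|E|; coordinate i
   corresponds to the edge enum_val i of E. *)
Definition chi (T : finType) (E : {set {set T}}) (M : {set {set T}}) : 'cV[R]_#|E| :=
  \col_(i < #|E|) (if @enum_val _ (mem E) i \in M then 1 else 0).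

Definition Pmatch (T : finType) (E : {set {set T}}) : set 'cV[R]_#|E| :=
  [set x | exists lam : {set {set T}} -> R,
      [/\ forall M, 0 <= lam M,
          forall M, ~~ is_matching E M -> lam M = 0,
          \sum_(M : {set {set T}}) lam M = 1 &
          x = \sum_(M : {set {set T}}) lam M *: chi E M]].

Definition polyhedron (d' m k : nat) (A : 'M[R]_(m, d')) (b : 'cV[R]_m)
    (C : 'M[R]_(k, d')) (e : 'cV[R]_k) : set 'cV[R]_d' :=
  [set y | (forall i, (A *m y) i 0 <= b i 0) /\ C *m y = e].

Definition has_extension_with (d : nat) (P : set 'cV[R]_d) (m : nat) : Prop :=
  exists (d' k : nat) (A : 'M[R]_(m, d')) (b : 'cV[R]_m)
         (C : 'M[R]_(k, d')) (e : 'cV[R]_k) (F : 'M[R]_(d, d')) (g : 'cV[R]_d),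
    (fun y => F *m y + g) @` polyhedron A b C e = P.

(* Default 0 if no extension exists (never happens for polytopes). *)
Definition xc (d : nat) (P : set 'cV[R]_d) : nat :=
  match pselect (exists m, `[< has_extension_with P m >]) with
  | left h => ex_minn h
  | right _ => 0%N
  end.

End Defs.

(* Main.v *)
Require Import Defs.
From mathcomp Require Import all_boot all_order all_algebra.
From mathcomp Require Import boolp classical_sets reals exp.
From mathcomp Require Import sequences.
From mathcomp Require Import ring lra zify.
From mathcomp Require Import fintype finset bigop.
Import Order.TTheory GRing.Theory Num.Theory.
Local Open Scope ring_scope.

Lemma mul2bin n : ('C(n,2) * 2 = n * n.-1)%N.
Proof. elim: n => [|n IH] //; rewrite binS bin1 mulnDl IH; case: n {IH} => //= n; lia. Qed.

Section RealBound.
Variable R : realType.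

Lemma ln2_ge : (3/5 : R) <= ln 2.
Proof.
have h1 : expR (3/20 : R) <= 20/17.
  have := expR_ge1Dx (- (3/20:R)); rewrite expRN.
  have := expR_gt0 (3/20 : R); set e := expR _ => e0 H.
  have ee : e * e^-1 = 1 by rewrite divff // gt_eqF.
  nra.
have h2 : expR (3/5 : R) = expR (3/20) ^+ 4.
  by rewrite -expRM_natl; congr expR; lra.
have h3 : expR (3/5 : R) <= 2.
  rewrite h2; apply: (le_trans (lerXn2r 4 _ _ h1)); rewrite ?nnegrE ?expR_ge0 //; first lra.
  rewrite !exprS expr0; lra.
rewrite -[X in X <= _]expRK ler_ln ?posrE ?expR_gt0 //.
Qed.

Lemma ln_pow2_ge (n j : nat) : (2 ^ j <= n)%N -> (3/5 : R) * j%:R <= ln n%:R.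
Proof.
move=> hj.
have hn : (0 < n)%N by apply: leq_trans hj; rewrite expn_gt0.
apply: (@le_trans _ _ (ln ((2:R) ^+ j))).
  rewrite lnXn // -mulr_natr; have := ln2_ge; have := ler0n R j; nra.
rewrite ler_ln ?posrE ?exprn_gt0 ?ltr0n //.
by rewrite -(natrX R 2 j) ler_nat.
Qed.

Lemma pow98 (h : nat) : 2 * h%:R + 1 <= 8 * (9/8 : R) ^+ h.
Proof.
suff H : 1 + h%:R / 8 + h%:R * (h%:R - 1) / 128 <= (9/8 : R) ^+ h.
  have : (0:R) <= (h%:R - 17/2) * (h%:R - 17/2) by rewrite -expr2 sqr_ge0.
  set y := h%:R; set b := _ ^+ h in H *. nra.
elim: h => [|h IH]; first by rewrite expr0; lra.
rewrite exprS -natr1.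
have : (0:R) <= h%:R * (h%:R - 1).
  case: h {IH} => [|h]; first by rewrite mul0r.
  rewrite -natr1 addrK; have := ler0n R h; nra.
have : (0:R) <= h%:R by apply: ler0n.
set y := h%:R in IH *; set b := _ ^+ h in IH *. nra.
Qed.

Lemma real_bound (n : nat) : (2 <= n)%N ->
  (2:R) ^+ (n./2) * (n%:R * (n%:R - 1) / 2) * (n%:R * (n%:R + 1) / 2)
    <= ln (n%:R : R) * n%:R ^+ 3 * (3/2) ^+ n.
Proof.
move=> hn.
have [small|big] := leqP n 15.
{   have L1 := ln_pow2_ge n 1. have L2 := ln_pow2_ge n 2. have L3 := ln_pow2_ge n 3.
  case: n hn small L1 L2 L3 => [|[|[|[|[|[|[|[|[|[|[|[|[|[|[|[|n]]]]]]]]]]]]]]]] //= _ _ L1 L2 L3.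
  all: rewrite ?expr0 ?exprS ?expr0 /=.
  all: try (have {}L1 := L1 isT); try (have {}L2 := L2 isT); try (have {}L3 := L3 isT).
  all: lra. }
have L4 := ln_pow2_ge n 4 (leq_trans (isT : (2^4 <= 16)%N) big).
set h := n./2.
have nE : n = (odd n + h.*2)%N by rewrite odd_double_half.
set x : R := n%:R.
have hx : x <= 2 * h%:R + 1.
  rewrite /x nE natrD -mul2n natrM; case: (odd n) => /=; lra.
have hx0 : (16:R) <= x by rewrite /x (ler_nat R 16 n).
have P := pow98 h.
have e1 : (3/2 : R) ^+ n >= (9/4) ^+ h.
  rewrite nE exprD -mul2n exprM; have -> : (3/2:R)^+2 = 9/4 by rewrite expr2; lra.
  rewrite ler_peMl ?exprn_ge0 //; case: (odd n) => /=; rewrite ?expr0 ?expr1; lra.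
have e2 : (9/4 : R) ^+ h = 2 ^+ h * (9/8) ^+ h.
  by rewrite -exprMn; congr (_ ^+ _); lra.
have p2 : (0:R) < 2 ^+ h by apply: exprn_gt0; lra.
have p98 : (0:R) < (9/8) ^+ h by apply: exprn_gt0; lra.
rewrite e2 in e1.
set a := (2:R) ^+ h in e1 p2 *; set b := (9/8 : R) ^+ h in e1 P p98 *.
set c := (3/2 : R) ^+ n in e1 *.
set l := ln x in L4 *.
have x3 : x ^+ 3 = x * x * x by rewrite !exprS expr0 mulr1 mulrA.
rewrite x3.
(* LHS <= a x^4/4 ; RHS >= 12/5 x^3 a b ; need x <= 48/5 b *)
have hb : x <= 48/5 * b by lra.
have c0 : 0 <= c by apply: exprn_ge0; lra.
have ab0 : 0 <= a * b by apply: mulr_ge0; lra.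
clearbody x a b c l.
have ax : 0 <= a * x by apply: mulr_ge0; lra.
have axx : 0 <= a * x * x by apply: mulr_ge0; lra.
have h1 : a * (x * (x - 1) / 2) * (x * (x + 1) / 2) <= a * x * (x * x * x) / 4 by nra.
have hx3 : 0 <= x * x * x by apply: mulr_ge0; [apply: mulr_ge0|]; lra.
move: h1 hx3; set X := x * x * x; clearbody X => h1 hx3.
have Xc : 0 <= X * c by apply: mulr_ge0; lra.
have aX : 0 <= a * X by apply: mulr_ge0; lra.
have : 12/5 * X * (a * b) <= l * X * c by nra.
nra.
Qed.
End RealBound.


Section Kernel.
Variable R : realType.

Lemma sum_reindex (J : finType) (G0 : J -> R) (Y0 : 'I_#|J| -> R) :
  \sum_(s < #|J|) G0 (enum_val s) * Y0 s = \sum_(j : J) G0 j * Y0 (enum_rank j).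
Proof.
rewrite (reindex enum_rank) /=; last by apply: onW_bij; exact: enum_rank_bij.
by apply: eq_bigr => j _; rewrite enum_rankK.
Qed.

Lemma ext_fin (d : nat) (P : set 'cV[R]_d) (J I K : finType)
  (a : I -> J -> R) (b : I -> R) (c : K -> J -> R) (e : K -> R) (f : 'I_d -> J -> R) :
  (forall x, P x <-> exists y : J -> R,
     [/\ forall i, \sum_j a i j * y j <= b i,
         forall k, \sum_j c k j * y j = e k &
         forall r, x r 0 = \sum_j f r j * y j]) ->
  has_extension_with P #|I|.
Proof.
move=> HP.
exists #|J|, #|K|.
exists (\matrix_(r, s) a (enum_val r) (enum_val s)), (\col_r b (enum_val r)).
exists (\matrix_(r, s) c (enum_val r) (enum_val s)), (\col_r e (enum_val r)).
exists (\matrix_(r, s) f r (enum_val s)), 0.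
rewrite predeqE => x; split.
- case=> Y [HA HC] <-{x}; apply/HP.
  exists (fun j => Y (enum_rank j) 0); split.
  + move=> i; have := HA (enum_rank i); rewrite !mxE enum_rankK.
    by under eq_bigr => s _ do rewrite mxE enum_rankK; rewrite (@sum_reindex _ (a i) (fun s => Y s 0)).
  + move=> k; have := congr1 (fun M : 'cV[R]_#|K| => M (enum_rank k) 0) HC; rewrite !mxE enum_rankK.
    by under eq_bigr => s _ do rewrite mxE enum_rankK; rewrite (@sum_reindex _ (c k) (fun s => Y s 0)).
  + move=> r; rewrite !mxE addr0.
    by under eq_bigr => s _ do rewrite mxE; rewrite (@sum_reindex _ (f r) (fun s => Y s 0)).
- move/HP=> [y [Ha Hc Hf]].
  exists (\col_s y (enum_val s)); first split.
  + move=> r; rewrite !mxE.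
    under eq_bigr => s _ do rewrite !mxE.
    rewrite (@sum_reindex _ (a (enum_val r)) (fun s => y (enum_val s))).
    under eq_bigr => j _ do rewrite enum_rankK.
    exact: Ha.
  + apply/matrixP => r z; rewrite (ord1 z) !mxE.
    under eq_bigr => s _ do rewrite !mxE.
    rewrite (@sum_reindex _ (c (enum_val r)) (fun s => y (enum_val s))).
    under eq_bigr => j _ do rewrite enum_rankK.
    exact: Hc.
  + apply/matrixP => r z; rewrite (ord1 z) !mxE addr0.
    under eq_bigr => s _ do rewrite !mxE.
    rewrite (@sum_reindex _ (f r) (fun s => y (enum_val s))).
    under eq_bigr => j _ do rewrite enum_rankK.
    by rewrite Hf.
Qed.

Lemma xc_le (d : nat) (P : set 'cV[R]_d) m : has_extension_with P m -> (xc P <= m)%N.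
Proof.
move=> H; rewrite /xc; case: pselect => [h|nh].
- by case: ex_minnP => m0 _ Hmin; apply: Hmin; apply/asboolP.
- by exfalso; apply: nh; exists m; apply/asboolP.
Qed.

Lemma kernel_nz (Rw Cl : finType) (a : Rw -> Cl -> R) :
  (#|Rw| < #|Cl|)%N \/
  ((#|Rw| <= #|Cl|)%N /\ exists u : Rw -> R, (exists r, u r != 0) /\
        forall s, \sum_r u r * a r s = 0) ->
  exists d : Cl -> R, (exists s, d s != 0) /\ forall r, \sum_s a r s * d s = 0.
Proof.
move=> Hc.
pose A : 'M[R]_(#|Rw|, #|Cl|) := \matrix_(i, j) a (enum_val i) (enum_val j).
have rk : (\rank A < #|Cl|)%N.
  case: Hc => [lt | [le [u [[r ur] hu]]]].
    exact: leq_ltn_trans (rank_leq_row A) lt.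
  apply: leq_trans le.
  pose U : 'rV[R]_#|Rw| := \row_i u (enum_val i).
  have UA : U *m A = 0.
    apply/matrixP => z s; rewrite (ord1 z) !mxE.
    under eq_bigr => i _ do rewrite !mxE.
    under eq_bigr => i _ do rewrite mulrC.
    rewrite (@sum_reindex _ (fun r => a r (enum_val s)) (fun i => u (enum_val i))).
    under eq_bigr => j _ do rewrite enum_rankK mulrC.
    exact: hu.
  have U0 : U != 0.
    apply/negP => /eqP /matrixP /(_ 0 (enum_rank r)); rewrite !mxE enum_rankK => e.
    by move: ur; rewrite e eqxx.
  have Uk : (U <= kermx A)%MS by apply/sub_kermxP.
  have := mxrankS Uk; rewrite mxrank_ker.
  have : (0 < \rank U)%N by rewrite lt0n mxrank_eq0.
  move=> h1 h2; have := leq_trans h1 h2; rewrite subn_gt0 => h3.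
  exact: h3.
pose B := A^T.
pose K := kermx B.
have K0 : K != 0.
  rewrite -mxrank_eq0 /K mxrank_ker mxrank_tr -lt0n subn_gt0; exact: rk.
have [i0 Wi] : exists i, row i K != 0.
  apply/existsP; apply: contraR K0 => /existsPn H; apply/eqP/row_matrixP => i.
  by rewrite row0; apply/eqP; move: (H i); rewrite negbK.
pose W := row i0 K.
have WB : W *m B = 0 by rewrite /W -row_mul mulmx_ker row0.
have [s0 Ws0] : exists s, W 0 s != 0.
  apply/existsP; apply: contraR Wi => /existsPn H; apply/eqP/matrixP => z s.
  by rewrite (ord1 z) [RHS]mxE; apply/eqP; move: (H s); rewrite negbK.
clearbody W.
exists (fun s => W 0 (enum_rank s)); split.
  by exists (enum_val s0); rewrite enum_valK.
move=> r.
have E1 : \sum_s a r s * W 0 (enum_rank s) = (W *m B) 0 (enum_rank r).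
  rewrite [RHS]mxE -(@sum_reindex _ (a r) (W 0)); apply: eq_bigr => k _.
  by rewrite /B !mxE enum_rankK mulrC.
by rewrite E1 WB mxE.
Qed.
End Kernel.

Section Core.
Variable R : realType.
Variable T : finType.
Variable E : {set {set T}}.
Hypothesis hE : forall S, S \in E -> #|S| = 2%N.

Definition edge (j : 'I_#|E|) : {set T} := @enum_val _ (mem E) j.
Lemma edge_in j : edge j \in E. Proof. exact: enum_valP. Qed.
Lemma edge_inj : injective edge. Proof. exact: enum_val_inj. Qed.
Lemma edge_card j : #|edge j| = 2%N. Proof. exact: hE (edge_in j). Qed.
Lemma edge2 j : exists p q, p != q /\ edge j = [set p; q].
Proof. by move: (edge_card j) => /eqP /cards2P. Qed.

Definition cross (c : T -> bool) (S : {set T}) : bool :=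
  [exists x in S, exists y in S, c x != c y].

Lemma cross_pair (c : T -> bool) p q : cross c [set p; q] -> c p != c q.
Proof.
case/existsP => x /andP [xin /existsP [y /andP [yin cxy]]].
rewrite !inE in xin yin; move: cxy.
case/orP: xin => /eqP ->; case/orP: yin => /eqP ->; rewrite ?eqxx //.
by rewrite eq_sym.
Qed.

Definition deg (y : 'I_#|E| -> R) (v : T) := \sum_(j | v \in edge j) y j.

Lemma le_sum1 (X : finType) (P : pred X) (F : X -> R) j :
  P j -> (forall i, P i -> 0 <= F i) -> F j <= \sum_(i | P i) F i.
Proof.
move=> Pj F0; rewrite (bigD1 j) //= lerDl sumr_ge0 // => i /andP [Pi _]; exact: F0.
Qed.

Lemma le_sum2 (X : finType) (P : pred X) (F : X -> R) j1 j2 :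
  j1 != j2 -> P j1 -> P j2 -> (forall i, P i -> 0 <= F i) ->
  F j1 + F j2 <= \sum_(i | P i) F i.
Proof.
move=> ne P1 P2 F0; rewrite (bigD1 j1) //= (bigD1 j2) /=; last by rewrite P2 eq_sym.
rewrite addrA lerDl sumr_ge0 // => i /andP [/andP [Pi _] _]; exact: F0.
Qed.

Definition feas (c : T -> bool) (t : R) (y : 'I_#|E| -> R) :=
  [/\ forall j, 0 <= y j, forall j, ~~ cross c (edge j) -> y j = 0
    & forall v, deg y v <= t].

Lemma feas_le c t y j : feas c t y -> y j <= t.
Proof.
case=> y0 _ yt; have [p [q [_ ej]]] := edge2 j.
apply: le_trans (yt p); apply: le_sum1; first by rewrite ej !inE eqxx.
by move=> i _; exact: y0.
Qed.

Definition frac (t : R) (y : 'I_#|E| -> R) := [set j | (y j != 0) && (y j != t)].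
Definition ntight (t : R) (y : 'I_#|E| -> R) := [set v | deg y v != t].
Definition Phi t y := (#|frac t y| + #|ntight t y|)%N.

Definition decomp_of (t : R) (y : 'I_#|E| -> R) :=
  exists mu : {set {set T}} -> R,
    [/\ forall M, 0 <= mu M, forall M, ~~ is_matching E M -> mu M = 0,
        \sum_M mu M = t &
        forall j, y j = \sum_M mu M * (if edge j \in M then 1 else 0)].

Lemma base_case c t y : 0 <= t -> feas c t y -> frac t y = set0 -> decomp_of t y.
Proof.
move=> t0 fy fr0.
have yv j : y j = 0 \/ y j = t.
  have : j \notin frac t y by rewrite fr0 inE.
  rewrite inE negb_and !negbK => /orP [] /eqP; by [left|right].
have [t0p|tpos] := eqVneq t 0.
  exists (fun _ => 0); split => //.
  - by rewrite big1.
  - move=> j; rewrite big1 => [|M _]; last by rewrite mul0r.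
    by case: (yv j) => ->; rewrite ?t0p.
have tp : 0 < t by rewrite lt_neqAle eq_sym tpos t0.
case: fy => y0 ycr yt.
pose M0 := [set edge j | j in [set j | y j == t]].
have M0E j : (edge j \in M0) = (y j == t) by rewrite mem_imset ?inE //; exact: edge_inj.
have mM0 : is_matching E M0.
  apply/andP; split.
    by apply/subsetP => S /imsetP [j _ ->]; exact: edge_in.
  apply/forallP => S1; apply/implyP => /imsetP [j1 j1in ->].
  apply/forallP => S2; apply/implyP => /imsetP [j2 j2in ->].
  apply/implyP => ne; rewrite -setI_eq0; apply/eqP/setP => v; rewrite !inE; apply/negP.
  move=> /andP [v1 v2].
  have jne : j1 != j2 by apply: contra ne => /eqP ->.
  have := @le_sum2 _ (fun j => v \in edge j) y _ _ jne v1 v2 (fun i _ => y0 i).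
  rewrite inE in j1in; rewrite inE in j2in.
  rewrite (eqP j1in) (eqP j2in) => h; have := le_trans h (yt v); lra.
exists (fun M => if M == M0 then t else 0); split.
- by move=> M; case: eqP.
- by move=> M nM; case: eqP => // e; move: nM; rewrite e mM0.
- by rewrite (bigD1 M0) //= eqxx big1 ?addr0 // => M /negbTE ->.
- move=> j; rewrite (bigD1 M0) //= eqxx big1 ?addr0; last by move=> M /negbTE ->; rewrite mul0r.
  rewrite M0E; case: eqP => [->|ne]; first by rewrite mulr1.
  by rewrite mulr0; case: (yv j).
Qed.

Lemma card_sumb (X : finType) (A : {set X}) (P : pred X) :
  #|[set x in A | P x]| = (\sum_(x in A) (P x : nat))%N.
Proof.
rewrite -sum1_card big_mkcond [RHS]big_mkcond /=; apply: eq_bigr => x _.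
by rewrite !inE; case: (x \in A); case: (P x).
Qed.

Lemma LA (c : T -> bool) (H : {set 'I_#|E|}) (Q : {set T}) :
  H != set0 -> (forall j, j \in H -> cross c (edge j)) ->
  (forall v, v \in Q -> #|[set j in H | v \in edge j]| != 1%N) ->
  exists d : 'I_#|E| -> R, [/\ exists j, d j != 0, forall j, j \notin H -> d j = 0 &
     forall v, v \in Q -> \sum_(j | v \in edge j) d j = 0].
Proof.
move=> H0 Hcr HQ.
pose Q' := [set v in Q | [exists j in H, v \in edge j]].
pose a (r : {v in Q'}) (s : {j in H}) : R := if val r \in edge (val s) then 1 else 0.
have cQ : #|{: {v in Q'}}| = #|Q'| by rewrite card_sig; apply: eq_card => x; rewrite inE.
have cH : #|{: {j in H}}| = #|H| by rewrite card_sig; apply: eq_card => x; rewrite inE.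
have dc : (\sum_(v in Q') #|[set j in H | v \in edge j]| =
           \sum_(j in H) #|[set v in Q' | v \in edge j]|)%N.
  under eq_bigr => v _ do rewrite card_sumb.
  rewrite exchange_big /=; apply: eq_bigr => j _; by rewrite card_sumb.
have le1 : (2 * #|Q'| <= \sum_(v in Q') #|[set j in H | v \in edge j]|)%N.
  rewrite mulnC -sum_nat_const; apply: leq_sum => v; rewrite inE => /andP [vQ /existsP [j /andP [jH vj]]].
  have : (0 < #|[set j in H | v \in edge j]|)%N.
    by apply/card_gt0P; exists j; rewrite inE jH vj.
  have := HQ v vQ; case: #|_| => [|[|n]] //.
have le2 : forall j, (#|[set v in Q' | v \in edge j]| <= 2)%N.
  move=> j; rewrite -(edge_card j); apply: subset_leq_card; apply/subsetP => v; rewrite inE => /andP [].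
  done.
have le3 : (\sum_(j in H) #|[set v in Q' | v \in edge j]| <= 2 * #|H|)%N.
  by rewrite mulnC -sum_nat_const; apply: leq_sum => j _; exact: le2.
have [d' [[s0 ds0] hd']] : exists d : {j in H} -> R, (exists s, d s != 0) /\
    forall r, \sum_s a r s * d s = 0.
  apply: kernel_nz.
  have [lt|ge] := ltnP #|Q'| #|H|; first by left; rewrite cQ cH.
  have eqQH : #|Q'| = #|H|.
    apply/eqP; rewrite eqn_leq ge andbT; rewrite -(leq_pmul2l (isT : (0 < 2)%N)).
    by apply: leq_trans le1 _; rewrite dc.
  right; split; first by rewrite cQ cH eqQH.
  have full : forall j, j \in H -> #|[set v in Q' | v \in edge j]| = 2%N.
    have S2 : (\sum_(j in H) (2 - #|[set v in Q' | v \in edge j]|) = 0)%N.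
      have : (\sum_(j in H) (2 - #|[set v in Q' | v \in edge j]|) +
              \sum_(j in H) #|[set v in Q' | v \in edge j]| = 2 * #|H|)%N.
        rewrite -big_split /= mulnC -sum_nat_const; apply: eq_bigr => j _.
        by rewrite subnK // le2.
      have := leq_trans le1 (eq_leq dc); rewrite eqQH; lia.
    move=> j jH; move/eqP: S2; rewrite sum_nat_eq0 => /forallP /(_ j); rewrite jH /= subn_eq0.
    by move=> h; apply/eqP; rewrite eqn_leq le2 h.
  have sub : forall j, j \in H -> forall v, v \in edge j -> v \in Q'.
    move=> j jH v vj.
    have := full j jH; rewrite -(edge_card j) => /subset_cardP.
    have ss : [set v in Q' | v \in edge j] \subset edge j.
      by apply/subsetP => w; rewrite inE => /andP [].
    move=> /(_ ss) eqs; move: vj; rewrite -eqs inE => /andP [].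
    done.
  have [v0 v0Q] : exists v, v \in Q'.
    apply/card_gt0P; rewrite eqQH card_gt0; exact: H0.
  exists (fun r => if c (val r) then 1 else -1); split.
    exists (Sub v0 v0Q); by case: (c _); rewrite ?oppr_eq0 oner_eq0.
  move=> s.
  have [p [q [pq ej]]] := edge2 (val s).
  have cpq : c p != c q by apply: cross_pair; rewrite -ej; exact: Hcr _ (valP s).
  rewrite /a.
  rewrite -(big_sub Q' (fun v => (if c v then 1 else -1) * (if v \in edge (val s) then 1 else 0))) /=.
  rewrite (big_setID (edge (val s))) /=.
  rewrite [X in _ + X]big1 ?addr0; last first.
    by move=> v; rewrite !inE => /andP [/negbTE -> _]; rewrite mulr0.
  have -> : Q' :&: edge (val s) = [set p; q].
    apply/setP => v; rewrite inE -ej; apply/andP/idP => [[] //|vj]; split => //.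
    exact: sub _ (valP s) v vj.
  rewrite big_setU1 ?inE // big_set1 ej !inE !eqxx ?orbT /=.
  by move: cpq; case: (c p); case: (c q) => //= _; rewrite !mulr1; lra.
exists (fun j => if insub j is Some s then d' s else 0); split.
- by exists (val s0); rewrite valK.
- by move=> j jH; case: insubP => [u uH _|//]; rewrite uH in jH.
- move=> v vQ; case: (boolP (v \in Q')) => vQ'.
  + rewrite big_mkcond (bigID (fun j => j \in H)) /= [X in _ + X]big1 ?addr0; last first.
      move=> j jH; case: (v \in edge j) => //.
      by case: insubP => [u uH _|//]; rewrite uH in jH.
    rewrite (big_sub H (fun j => if v \in edge j then
       (if insub j is Some s then d' s else 0) else 0)) /=.
    rewrite -[RHS](hd' (Sub v vQ')); apply: eq_bigr => x _; rewrite valK /a /=.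
    by case: (v \in edge _); rewrite ?mul1r ?mul0r.
  + rewrite big1 // => j vj; case: insubP => [u uH _|//]; exfalso.
    move/negP: vQ'; apply; rewrite inE vQ; apply/existsP; exists j; by rewrite uH vj.
Qed.

Lemma step (c : T -> bool) (t : R) (y d : 'I_#|E| -> R) : 0 <= t -> feas c t y ->
  (exists j, d j != 0) -> (forall j, j \notin frac t y -> d j = 0) ->
  (forall v, deg y v = t -> \sum_(j | v \in edge j) d j = 0) ->
  exists eps : R, [/\ 0 < eps, feas c t (fun j => y j + eps * d j) &
     (Phi t (fun j => (y j + eps * d j)%R) < Phi t y)%N].
Proof.
move=> t0 fy [j0 dj0] dfr dQ.
have yle j : y j <= t by exact: feas_le fy.
case: fy => y0 ycr yt.
pose D v := \sum_(j | v \in edge j) d j.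
pose cand (i : 'I_#|E| + T) : bool := match i with inl j => d j != 0 | inr v => 0 < D v end.
pose ratio (i : 'I_#|E| + T) : R := match i with
  | inl j => if d j < 0 then y j / (- d j) else (t - y j) / d j
  | inr v => (t - deg y v) / D v end.
have F1 j : d j != 0 -> 0 < y j /\ y j < t.
  move=> dj; have : j \in frac t y by apply: contraR dj => /dfr ->; rewrite eqxx.
  rewrite inE => /andP [yj0 yjt]; split.
    by rewrite lt_neqAle eq_sym yj0 y0.
  by rewrite lt_neqAle yjt yle.
have F2 v : 0 < D v -> deg y v < t.
  move=> Dv; rewrite lt_neqAle yt andbT; apply/eqP => e.
  by move: Dv; rewrite /D dQ // ltxx.
have pos i : cand i -> 0 < ratio i.
  case: i => [j|v] /= ci.
    have [y1 y2] := F1 j ci.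
    case: (ltP (d j) 0) => dn; first by apply: divr_gt0 => //; rewrite oppr_gt0.
    apply: divr_gt0; first by rewrite subr_gt0.
    by rewrite lt_neqAle eq_sym ci dn.
  by apply: divr_gt0 => //; rewrite subr_gt0 F2.
have Pi0 : cand (inl j0) by [].
have [istar Pst Hmin] := arg_minP ratio Pi0.
set eps := ratio istar.
have eps0 : 0 < eps by exact: pos.
have Hm i : cand i -> eps <= ratio i by move=> ci; exact: Hmin.
pose y' j := y j + eps * d j.
have degE v : deg y' v = deg y v + eps * D v.
  by rewrite /deg /y' big_split /= -mulr_sumr.
have fy' : feas c t y'.
  split.
  - move=> j; rewrite /y'; have [dz|dnz] := eqVneq (d j) 0; first by rewrite dz mulr0 addr0.
    have := Hm (inl j) dnz; rewrite /ratio.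
    case: (ltP (d j) 0) => dn h.
      have e : y j / (- d j) * (- d j) = y j by rewrite divfK // oppr_eq0.
      have : 0 < - d j by rewrite oppr_gt0.
      nra.
    have := y0 j; nra.
  - move=> j nc; have yj := ycr j nc; rewrite /y' yj dfr ?mulr0 ?addr0 //; by rewrite inE yj eqxx.
  - move=> v; rewrite degE.
    have [Dp|Dn] := ltP 0 (D v).
      have := Hm (inr v) Dp; rewrite /ratio => h.
      have e : (t - deg y v) / D v * D v = t - deg y v by rewrite divfK // gt_eqF.
      nra.
    have := yt v; nra.
have sub1 : frac t y' \subset frac t y.
  apply/subsetP => j; apply: contraTT => jn.
  by rewrite inE /y' dfr // mulr0 addr0; rewrite inE in jn.
have sub2 : ntight t y' \subset ntight t y.
  apply/subsetP => v; apply: contraTT; rewrite !inE !negbK degE => /eqP e.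
  by rewrite /D dQ // mulr0 addr0 e.
have strict : (exists2 j, j \in frac t y & j \notin frac t y') \/
                (exists2 v, v \in ntight t y & v \notin ntight t y').
  have key : forall i, cand i -> eps = ratio i ->
     (exists2 j, j \in frac t y & j \notin frac t y') \/
     (exists2 v, v \in ntight t y & v \notin ntight t y').
    move=> [j|v] /= ci e.
    - left; exists j.
        rewrite inE; have [y1 y2] := F1 j ci; apply/andP; split.
          by rewrite gt_eqF.
        by rewrite lt_eqF.
      rewrite inE negb_and !negbK /y' e.
      case: (ltP (d j) 0) => dn; apply/orP; [left|right]; apply/eqP; field; rewrite ?oppr_eq0; exact: ci.
    - right; exists v.
        by rewrite inE lt_eqF // F2.
      rewrite inE negbK degE e.
      rewrite /ratio /=; apply/eqP; field; exact: lt0r_neq0.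
  exact: key istar Pst erefl.
exists eps; split => //.
rewrite /Phi.
case: strict => [[j j1 j2]|[v v1 v2]].
- have pr : frac t y' \proper frac t y by apply/properP; split => //; exists j.
  by rewrite -addSn; apply: leq_add; [exact: proper_card | exact: subset_leq_card].
- have pr : ntight t y' \proper ntight t y by apply/properP; split => //; exists v.
  by rewrite -addnS; apply: leq_add; [exact: subset_leq_card | exact: proper_card].
Qed.

Lemma decomp (c : T -> bool) (t : R) (y : 'I_#|E| -> R) :
  0 <= t -> feas c t y -> decomp_of t y.
Proof.
move=> t0; have [n] := ubnP (Phi t y); elim: n y => // n IH y; rewrite ltnS => lePhi fy.
have [fr0|frne] := eqVneq (frac t y) set0; first exact: (@base_case c t y t0 fy fr0).
have yle j : y j <= t by exact: feas_le fy.
have fy0 := fy; case: fy0 => y0 ycr yt.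
have Hcr : forall j, j \in frac t y -> cross c (edge j).
  move=> j; rewrite inE => /andP [yj _]; apply: contraR yj => nc; by rewrite ycr.
have HQ : forall v, v \in [set v | deg y v == t] -> #|[set j in frac t y | v \in edge j]| != 1%N.
  move=> v; rewrite inE => /eqP tight; apply/negP => /cards1P [j1 Hj1].
  have : j1 \in [set j in frac t y | v \in edge j] by rewrite Hj1 inE.
  rewrite inE => /andP [j1f vj1].
  have [y1p y1t] : 0 < y j1 /\ y j1 < t.
    move: j1f; rewrite inE => /andP [a b]; split.
      by rewrite lt_neqAle eq_sym a y0.
    by rewrite lt_neqAle b yle.
  have oth : forall j, v \in edge j -> j != j1 -> y j = 0 \/ y j = t.
    move=> j vj ne; have : j \notin frac t y.
      apply: contra ne => jf; have : j \in [set j in frac t y | v \in edge j] by rewrite inE jf vj.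
      by rewrite Hj1 inE.
    rewrite inE negb_and !negbK => /orP [] /eqP; by [left|right].
  move: tight; rewrite /deg (bigD1 j1) //=.
  set S := \sum_(i | _) _.
  have [[j2 /andP [/andP [vj2 ne2] yj2]]|none] :=
     pselect (exists j, (v \in edge j) && (j != j1) && (y j == t)).
    have : y j2 <= S.
      apply: (@le_sum1 _ (fun i => (v \in edge i) && (i != j1)) y j2); first by rewrite vj2.
      by move=> i _; exact: y0.
    move/eqP: yj2 => ->; lra.
  have -> : S = 0.
    apply: big1 => j /andP [vj ne]; case: (oth j vj ne) => // yjt.
    by exfalso; apply: none; exists j; rewrite vj ne yjt eqxx.
  lra.
have [d [[j0 dj0] dfr dQ]] := @LA c (frac t y) [set v | deg y v == t] frne Hcr HQ.
have dQ' : forall v, deg y v = t -> \sum_(j | v \in edge j) d j = 0.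
  by move=> v e; apply: dQ; rewrite inE e.
have [e1 [e10 f1 P1]] := @step c t y d t0 fy (ex_intro _ j0 dj0) dfr dQ'.
have n1 : exists j, - d j != 0 by exists j0; rewrite oppr_eq0.
have n2 : forall j, j \notin frac t y -> - d j = 0 by move=> j h; rewrite dfr // oppr0.
have n3 : forall v, deg y v = t -> \sum_(j | v \in edge j) - d j = 0.
  by move=> v h; rewrite sumrN dQ' // oppr0.
have [e2 [e20 f2 P2]] := @step c t y (fun j => - d j) t0 fy n1 n2 n3.
have [mu1 [m10 m1m m1s m1y]] := IH _ (leq_trans P1 lePhi) f1.
have [mu2 [m20 m2m m2s m2y]] := IH _ (leq_trans P2 lePhi) f2.
have e12 : 0 < e1 + e2 by rewrite addr_gt0.
pose al := e2 / (e1 + e2). pose be := e1 / (e1 + e2).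
have al0 : 0 <= al by rewrite divr_ge0 // ltW.
have be0 : 0 <= be by rewrite divr_ge0 // ltW.
exists (fun M => al * mu1 M + be * mu2 M); split.
- by move=> M; rewrite addr_ge0 // mulr_ge0.
- by move=> M nM; rewrite m1m // m2m // !mulr0 addr0.
- rewrite big_split /= -!mulr_sumr m1s m2s /al /be; field; exact: lt0r_neq0.
- move=> j.
  under eq_bigr => M _ do rewrite mulrDl -!mulrA.
  rewrite big_split /= -!mulr_sumr -m1y -m2y /al /be /=; field; exact: lt0r_neq0.
Qed.

Lemma card_bigcup_le (I X : finType) (P : pred I) (F : I -> {set X}) :
  (#|\bigcup_(i | P i) F i| <= \sum_(i | P i) #|F i|)%N.
Proof.
elim/big_rec2: _ => [|i n U _ le]; first by rewrite cards0.
by rewrite (leq_trans (leq_card_setU _ _).1) ?leq_add2l.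
Qed.

Lemma match_disj {M : {set {set T}}} {S1 S2 : {set T}} {x : T} : is_matching E M -> S1 \in M -> S2 \in M ->
  x \in S1 -> x \in S2 -> S1 = S2.
Proof.
case/andP=> _ /forallP dis S1M S2M x1 x2; apply/eqP; apply: contraT => ne.
have := dis S1; rewrite S1M /= => /forallP /(_ S2); rewrite S2M ne /= -setI_eq0 => /eqP e.
have : x \in S1 :&: S2 by rewrite inE x1 x2.
by rewrite e inE.
Qed.

Lemma match_in {M : {set {set T}}} {S : {set T}} : is_matching E M -> S \in M -> S \in E.
Proof. by case/andP => /subsetP sub _ /sub. Qed.

Lemma match_size M : is_matching E M -> (2 * #|M| <= #|T|)%N.
Proof.
move=> mM.
have tM : trivIset M.
  apply/trivIsetP => A B AM BM ne; rewrite -setI_eq0; apply/eqP/setP => x; rewrite !inE.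
  apply/negP => /andP [xA xB]; by move: ne; rewrite (match_disj mM AM BM xA xB) eqxx.
have := leq_card_cover M; case=> _; rewrite tM => /eqP e.
have : (\sum_(A in M) #|A| = #|M| * 2)%N.
  rewrite -sum_nat_const; apply: eq_bigr => A AM; exact: hE (match_in mM AM).
by rewrite -e mulnC => <-; apply: max_card.
Qed.

Definition pk (S : {set T}) := [set x in S | [pick z in S] == Some x].
Definition FD (D : {set {set T}}) := \bigcup_(S in D) pk S.

Lemma FD_on {M D : {set {set T}}} {S : {set T}} {x : T} : is_matching E M -> D \subset M -> S \in M -> x \in S ->
  (x \in FD D) = (S \in D) && ([pick z in S] == Some x).
Proof.
move=> mM DM SM xS; apply/bigcupP/andP => [[S' S'D]|[SD pz]].
  rewrite inE => /andP [xS' pz].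
  by rewrite -(match_disj mM (subsetP DM _ S'D) SM xS' xS).
by exists S => //; rewrite inE xS.
Qed.

Lemma cross_diff (g : T -> bool) p q : g p != g q -> cross g [set p; q].
Proof.
move=> ne; apply/existsP; exists p; rewrite !inE eqxx /=.
by apply/existsP; exists q; rewrite !inE eqxx orbT.
Qed.

Lemma good_count M : is_matching E M ->
  (2 ^ #|T| <= #|[set g : {ffun T -> bool} | [forall S in M, cross g S]]| * 2 ^ #|M|)%N.
Proof.
move=> mM.
pose D (g : {ffun T -> bool}) := [set S in M | ~~ cross g S].
have DM g : D g \subset M by apply/subsetP => S; rewrite inE => /andP [].
pose Phi (g : {ffun T -> bool}) := ([ffun x => g x (+) (x \in FD (D g))], D g).
have inj : injective Phi.
  move=> g1 g2 [e1 e2]; apply/ffunP => x.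
  have := congr1 (fun f : {ffun T -> bool} => f x) e1; rewrite /= !ffunE e2.
  by case: (g1 x); case: (g2 x); case: (x \in _).
have img : Phi @: setT \subset setX [set g : {ffun T -> bool} | [forall S in M, cross g S]] (powerset M).
  apply/subsetP => _ /imsetP [g _ ->]; rewrite inE /=; apply/andP; split; last first.
    by rewrite powersetE.
  rewrite inE; apply/forallP => S; apply/implyP => SM.
  have [p [q [pq eS]]] : exists p q, p != q /\ S = [set p; q].
    by apply/cards2P; rewrite hE // (match_in mM SM).
  have [z zS pz] : exists2 z, z \in S & [pick z in S] = Some z.
    case: pickP => [z zS|none]; first by exists z.
    by move: (none p); rewrite eS !inE eqxx.
  have fl x : x \in S -> (x \in FD (D g)) = (S \in D g) && (z == x).
    by move=> xS; rewrite (FD_on mM (DM g) SM xS) pz; congr (_ && _).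

  have pS : p \in S by rewrite eS !inE eqxx.
  have qS : q \in S by rewrite eS !inE eqxx orbT.
  rewrite eS; apply: cross_diff; rewrite !ffunE (fl p pS) (fl q qS).
  have zin : (z == p) || (z == q) by rewrite -(in_set2 z p q) -eS.
  have SDg : (S \in D g) = ~~ cross g S by rewrite inE SM.
  rewrite SDg; case: (boolP (cross g S)) => cr /=.
    rewrite !addbF; by move: cr; rewrite eS => /cross_pair.
  have gpq : g p = g q.
    move: cr; rewrite eS; apply: contraNeq => ne.
    by apply/existsP; exists p; rewrite !inE eqxx /=; apply/existsP; exists q; rewrite !inE eqxx orbT.
  have qp : (q == p) = false by rewrite eq_sym (negbTE pq).
  case/orP: zin => /eqP ->; rewrite eqxx ?(negbTE pq) ?qp gpq; by case: (g q).
have := subset_leq_card img; rewrite card_imset // cardsX card_powerset cardsT card_ffun card_bool.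
done.
Qed.

Lemma bern_aux b m : (b ^ m.+1 + m.+1 * b ^ m <= b.+1 ^ m.+1)%N.
Proof.
elim: m => [|m IH]; first by rewrite !expn1 expn0 muln1 addn1.
rewrite (expnS b.+1) (expnS b m.+1) (expnS b m).
have := leq_mul (leqnn b.+1) IH; rewrite (expnS b m).
set X := (b ^ m)%N; nia.
Qed.

Lemma bern b : (2 * b ^ b.+1 <= b.+1 ^ b.+1)%N.
Proof.
apply: leq_trans (bern_aux b b); rewrite (expnS b b); set X := (b ^ b)%N; nia.
Qed.

Lemma nat_ineq (n h e : nat) : (0 < h)%N -> (h <= n)%N ->
  ((2 ^ e - 1) * (2 ^ n - 2 ^ (n - h)) ^ (2 ^ h * maxn 1 e) <
   (2 ^ n) ^ (2 ^ h * maxn 1 e))%N.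
Proof.
move=> h0 hn.
set s := maxn 1 e; set r := (2 ^ h)%N; set a := (2 ^ (n - h))%N.
have nE : (2 ^ n = a * r)%N by rewrite /a /r -expnD subnK.
have r2 : (2 <= r)%N by rewrite /r -{1}(expn1 2) leq_exp2l.
have a0 : (0 < a)%N by rewrite /a expn_gt0.
set b := r.-1.
have rb : r = b.+1 by rewrite /b prednK // (leq_trans _ r2).
have b0 : (0 < b)%N by rewrite /b -ltnS -rb.
have sub : (2 ^ n - a = a * b)%N by rewrite nE rb mulnS; lia.
rewrite sub nE !expnMn.
have B : (2 ^ s * b ^ (r * s) <= r ^ (r * s))%N.
  have s0 : (0 < s)%N by rewrite /s leq_max ltnSn.
  rewrite !expnM -expnMn leq_exp2r // rb; exact: bern.
have es : (2 ^ e <= 2 ^ s)%N by rewrite leq_exp2l // /s leq_max leqnn orbT.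
have e1 : (1 <= 2 ^ e)%N by rewrite expn_gt0.
have Bk : (1 <= b ^ (r * s))%N by rewrite expn_gt0 b0.
have Ak : (1 <= a ^ (r * s))%N by rewrite expn_gt0 a0.
move: B es e1 Bk Ak.
set E2 := (2 ^ e)%N; set S2 := (2 ^ s)%N; set Bb := (b ^ (r * s))%N;
  set Aa := (a ^ (r * s))%N; set Rr := (r ^ (r * s))%N.
move=> B es e1 Bk Ak.
suff h1 : ((E2 - 1) * Bb < Rr)%N.
  by rewrite mulnCA ltn_pmul2l.
have h2 : ((E2 - 1) * Bb <= (S2 - 1) * Bb)%N by rewrite leq_mul2r leq_sub2r ?orbT.
rewrite mulnBl mul1n in h2.
move: h2 B Bk; set X := (S2 * Bb)%N; set Y := ((E2 - 1) * Bb)%N; lia.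
Qed.

Lemma cover_exists : (2 <= #|T|)%N ->
  exists f : 'I_(2 ^ (#|T|./2) * maxn 1 #|E|) -> {ffun T -> bool},
    forall M, is_matching E M -> exists i, forall S, S \in M -> cross (f i) S.
Proof.
move=> n2.
set n := #|T|; set h := n./2; set k := (2 ^ h * maxn 1 #|E|)%N.
have h0 : (0 < h)%N by rewrite /h geq_half_double.
have hn : (h <= n)%N by rewrite /h leq_half_double -addnn; lia.
have k0 : (0 < k)%N by rewrite muln_gt0 expn_gt0 leq_max.
pose Good (M : {set {set T}}) := [set g : {ffun T -> bool} | [forall S in M, cross g S]].
pose Fail (M : {set {set T}}) := [set F : {ffun 'I_k -> {ffun T -> bool}} | [forall i, F i \notin Good M]].
pose Ms := [set M | is_matching E M && (M != set0)].
have cardT : #|{: {ffun T -> bool}}| = (2 ^ n)%N by rewrite card_ffun card_bool.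
have cardFail M : M \in Ms -> (#|Fail M| <= (2 ^ n - 2 ^ (n - h)) ^ k)%N.
  rewrite inE => /andP [mM _].
  have e1 : #|Fail M| = (#|~: Good M| ^ k)%N.
    rewrite -[in RHS](card_ord k) -card_ffun_on; apply: eq_card => F; rewrite inE.
    apply/idP/idP => [/forallP H|/ffun_onP H]; [apply/ffun_onP => i | apply/forallP => i]; have := H i; by rewrite !inE.
  have gc := @good_count M mM.
  have ms := @match_size M mM.
  have Mh : (#|M| <= h)%N by rewrite /h geq_half_double -mul2n.
  have p1 : (2 ^ #|M| <= 2 ^ h)%N by rewrite leq_exp2l.
  have nE : (2 ^ n = 2 ^ (n - h) * 2 ^ h)%N by rewrite -expnD subnK.
  have g2 : (2 ^ (n - h) <= #|Good M|)%N.
    rewrite -(@leq_pmul2r (2 ^ h)) ?expn_gt0 // -nE.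
    apply: leq_trans gc _; exact: leq_mul.
  have cC := cardsC (Good M); rewrite cardT in cC.
  rewrite e1 leq_exp2r //; lia.
have cardMs : (#|Ms| <= 2 ^ #|E| - 1)%N.
  have sub : Ms \subset powerset E :\ set0.
    apply/subsetP => M; rewrite !inE => /andP [mM ne]; rewrite ne /=.
    by case/andP: mM.
  have := subset_leq_card sub.
  have := cardsD1 set0 (powerset E); rewrite card_powerset powersetE sub0set /=.
  lia.
have union : (#|\bigcup_(M in Ms) Fail M| < #|[set: {ffun 'I_k -> {ffun T -> bool}}]|)%N.
  rewrite cardsT card_ffun cardT card_ord.
  apply: leq_ltn_trans (@card_bigcup_le _ _ (fun M => M \in Ms) Fail) _.
  apply: (@leq_ltn_trans (#|Ms| * (2 ^ n - 2 ^ (n - h)) ^ k)%N).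
    rewrite -sum_nat_const; apply: leq_sum => M MMs; exact: cardFail.
  apply: leq_ltn_trans _ (nat_ineq n h #|E| h0 hn).
  by rewrite leq_mul2r cardMs orbT.
have [F _ FnU] : exists2 F, F \in [set: {ffun 'I_k -> {ffun T -> bool}}] &
    F \notin \bigcup_(M in Ms) Fail M.
  apply/subsetPn; apply/negP => /subset_leq_card; by rewrite leqNgt union.
exists F => M mM.
have [->|ne] := eqVneq M set0.
  by exists (Ordinal k0) => S; rewrite inE.
have MMs : M \in Ms by rewrite inE mM ne.
have : F \notin Fail M by apply: contra FnU => FF; apply/bigcupP; exists M.
rewrite inE negb_forall => /existsP [i]; rewrite negbK inE => /forall_inP Hi.
by exists i => S SM; exact: Hi S SM.
Qed.

Lemma sum_delta (X : finType) (x0 : X) (al : R) (y : X -> R) :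
  \sum_x (if x == x0 then al else 0) * y x = al * y x0.
Proof.
rewrite (bigD1 x0) //= eqxx big1 ?addr0 // => x /negbTE ->; by rewrite mul0r.
Qed.

Lemma sum_opt (X : finType) (o : option X) (al : R) :
  \sum_i (if o == Some i then al else 0) = if o is Some _ then al else 0.
Proof.
case: o => [i0|]; last by rewrite big1.
rewrite (bigD1 i0) //= eqxx big1 ?addr0 // => i ne.
by case: eqP => // -[e]; move: ne; rewrite e eqxx.
Qed.

Lemma match_deg M v : is_matching E M ->
  \sum_(j | v \in edge j) (if edge j \in M then 1 else 0 : R) <= 1.
Proof.
move=> mM.
case: (pselect (exists j, (v \in edge j) && (edge j \in M))) => [[j1 /andP [v1 M1]]|none].
  rewrite (bigD1 j1) //= M1 big1 ?addr0 // => j /andP [vj ne].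
  case: ifP => // Mj; exfalso; move/negP: ne; apply; apply/eqP.
  by apply: edge_inj; exact: (match_disj mM Mj M1 vj v1).
rewrite big1 ?ler01 // => j vj; case: ifP => // Mj.
by exfalso; apply: none; exists j; rewrite vj Mj.
Qed.

Lemma main_ext : (2 <= #|T|)%N ->
  has_extension_with (@Pmatch R T E) (2 ^ (#|T|./2) * maxn 1 #|E| * #|E| + 2 ^ (#|T|./2) * maxn 1 #|E| * #|T|).
Proof.
move=> n2.
have [f cov] := cover_exists n2.
set k := (2 ^ (#|T|./2) * maxn 1 #|E|)%N in f cov *.
pose J := (('I_k * 'I_#|E|) + 'I_k)%type.
pose I := (('I_k * 'I_#|E|) + ('I_k * T))%type.
pose K := (('I_k * 'I_#|E|) + 'I_1)%type.
pose a (r : I) (x : J) : R := match r with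
  | inl p => if x == inl p then -1 else 0
  | inr (i, v) => match x with
                  | inl (i', j') => if (i' == i) && (v \in edge j') then 1 else 0
                  | inr i' => if i' == i then -1 else 0 end end.
pose b (r : I) : R := 0.
pose c (r : K) (x : J) : R := match r with
  | inl (i, j) => if cross (f i) (edge j) then 0 else (if x == inl (i, j) then 1 else 0)
  | inr _ => match x with inl _ => 0 | inr _ => 1 end end.
pose e (r : K) : R := match r with inl _ => 0 | inr _ => 1 end.
pose fp (r : 'I_#|E|) (x : J) : R := match x with
  | inl (i, j) => if j == r then 1 else 0
  | inr _ => 0 end.
have cI : #|{: I}| = (k * #|E| + k * #|T|)%N by rewrite card_sum !card_prod !card_ord.
rewrite -cI.
apply: (@ext_fin R _ _ J I K a b c e fp).
have Sa1 i j (y : J -> R) : \sum_x a (inl (i, j)) x * y x = - y (inl (i, j)).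
  by rewrite /a sum_delta mulN1r.
have Sa2 i v (y : J -> R) : \sum_x a (inr (i, v)) x * y x =
    \sum_(j | v \in edge j) y (inl (i, j)) - y (inr i).
  rewrite big_sumType /= sum_delta mulN1r; congr (_ - _).
  rewrite (eq_bigr (fun p => (if (p.1 == i) && (v \in edge p.2) then 1 else 0) * y (inl (p.1, p.2)))); last by case.
  rewrite -(pair_bigA _ (fun i' j' => (if (i' == i) && (v \in edge j') then 1 else 0) * y (inl (i', j')))) /=.
  rewrite (bigD1 i) //= [X in _ + X]big1 ?addr0; last first.
    by move=> i' /negbTE ne; apply: big1 => j _; rewrite ne mul0r.
  rewrite eqxx [RHS]big_mkcond /=; apply: eq_bigr => j _.
  by case: (v \in edge j); rewrite ?mul1r ?mul0r.
have Sc1 i j (y : J -> R) : \sum_x c (inl (i, j)) x * y x =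
    if cross (f i) (edge j) then 0 else y (inl (i, j)).
  rewrite /c; case: ifP => _; first by rewrite big1 // => x _; rewrite mul0r.
  by rewrite sum_delta mul1r.
have Sc2 z (y : J -> R) : \sum_x c (inr z) x * y x = \sum_i y (inr i).
  rewrite big_sumType /= big1 ?add0r; last by move=> p _; rewrite mul0r.
  by apply: eq_bigr => i _; rewrite mul1r.
have Sf r (y : J -> R) : \sum_x fp r x * y x = \sum_i y (inl (i, r)).
  rewrite big_sumType /= [X in _ + X]big1 ?addr0; last by move=> p _; rewrite mul0r.
  rewrite (eq_bigr (fun p => (if p.2 == r then 1 else 0) * y (inl (p.1, p.2)))); last by case.
  rewrite -(pair_bigA _ (fun i j => (if j == r then 1 else 0) * y (inl (i, j)))) /=.
  by apply: eq_bigr => i _; rewrite sum_delta mul1r.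
have chiE (M : {set {set T}}) (r : 'I_#|E|) : chi R E M r 0 = if edge r \in M then 1 else 0.
  by rewrite /chi mxE.
move=> x; split.
- case=> lam [l0 lm l1 ->].
  pose io (M : {set {set T}}) : option 'I_k := [pick i | [forall S in M, cross (f i) S]].
  have ioS M : is_matching E M -> io M != None.
    move=> mM; rewrite /io; case: pickP => // none.
    have [i Hi] := cov M mM.
    have HH : [forall S in M, cross (f i) S] by apply/forall_inP.
    by move: (none i); rewrite HH.
  have ioC M i : io M = Some i -> forall S, S \in M -> cross (f i) S.
    rewrite /io; case: pickP => [i' Hi' [<-]|//] S SM.
    exact: (forall_inP Hi') S SM.
  have ioL M (al : R) : lam M != 0 -> (if io M is Some _ then al else 0) = al.
    move=> ln; case E0: (io M) => [i0|] //.
    have [mM|nM] := boolP (is_matching E M); first by move: (ioS M mM); rewrite E0.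
    by move: ln; rewrite lm // eqxx.
  pose y (z : J) : R := match z with
    | inl (i, j) => \sum_M (if io M == Some i then lam M * (if edge j \in M then 1 else 0) else 0)
    | inr i => \sum_M (if io M == Some i then lam M else 0) end.
  exists y; split.
  + case=> [[i j]|[i v]]; rewrite /b.
    * rewrite Sa1 oppr_le0 /y; apply: sumr_ge0 => M _; case: ifP => // _.
      by apply: mulr_ge0 => //; case: ifP.
    * rewrite Sa2 subr_le0 /y exchange_big /=; apply: ler_sum => M _.
      case: ifP => _; last by rewrite big1.
      rewrite -mulr_sumr.
      have [mM|nM] := boolP (is_matching E M); last by rewrite lm // !mul0r.
      by rewrite -{2}(mulr1 (lam M)); apply: ler_wpM2l => //; exact: match_deg.
  + case=> [[i j]|z]; rewrite /e.
    * rewrite Sc1; case: ifP => // ncr; rewrite /y; apply: big1 => M _.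
      case: eqP => [e0|_] //; case: ifP => [jM|_]; last by rewrite mulr0.
      by have := ioC M i e0 (edge j) jM; rewrite ncr.
    * rewrite Sc2 /y exchange_big /= -l1; apply: eq_bigr => M _; rewrite sum_opt.
      have [l0'|ln] := eqVneq (lam M) 0; first by rewrite l0'; case: (io M).
      exact: ioL.
  + move=> r; rewrite Sf /y summxE exchange_big /=; apply: eq_bigr => M _.
    rewrite mxE chiE sum_opt.
    have [l0'|ln] := eqVneq (lam M) 0; first by rewrite l0' mul0r; case: (io M).
    by rewrite ioL.
- case=> y [Hi He Hf].
  pose yi i j := y (inl (i, j)). pose ti i := y (inr i).
  have fe i : feas (f i) (ti i) (yi i).
    split.
    + by move=> j; have := Hi (inl (i, j)); rewrite Sa1 /b oppr_le0.
    + by move=> j ncr; have := He (inl (i, j)); rewrite Sc1 (negbTE ncr) /e.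
    + by move=> v; have := Hi (inr (i, v)); rewrite Sa2 /b subr_le0.
  have [v0 _] : exists v0 : T, v0 \in T by apply/card_gt0P; apply: leq_trans n2.
  have t0 i : 0 <= ti i.
    case: (fe i) => y0 _ yt; apply: le_trans (yt v0); apply: sumr_ge0 => j _; exact: y0.
  have H : forall i, exists mu : {set {set T}} -> R,
      [/\ forall M, 0 <= mu M, forall M, ~~ is_matching E M -> mu M = 0,
          \sum_M mu M = ti i &
          forall j, yi i j = \sum_M mu M * (if edge j \in M then 1 else 0)].
    move=> i; exact: (@decomp (f i) (ti i) (yi i) (t0 i) (fe i)).
  have [mu Hmu] := choice H.
  exists (fun M => \sum_i mu i M); split.
  + by move=> M; apply: sumr_ge0 => i _; case: (Hmu i).
  + by move=> M nM; apply: big1 => i _; case: (Hmu i) => _ h _ _; exact: h.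
  + rewrite exchange_big /=.
    have := He (inr ord0); rewrite Sc2 /e => <-.
    by apply: eq_bigr => i _; case: (Hmu i).
  + apply/matrixP => r z; rewrite (ord1 z) Hf Sf summxE.
    under [RHS]eq_bigr do rewrite mxE chiE.
    have Hy i j : y (inl (i, j)) = \sum_M mu i M * (if edge j \in M then 1 else 0).
      by case: (Hmu i) => _ _ _ h; exact: h j.
    under [LHS]eq_bigr => i _ do rewrite Hy.
    rewrite exchange_big /=; apply: eq_bigr => M _; by rewrite mulr_suml.
Qed.

End Core.


Lemma binR (R : realType) n : ('C(n, 2)%:R : R) = n%:R * (n%:R - 1) / 2.
Proof.
have := mul2bin n => /(congr1 (fun m => (m%:R : R))); rewrite !natrM.
case: n => [|n'] /=; first by rewrite !mul0r.
move=> e2; apply: (@mulIf _ 2); first by rewrite pnatr_eq0.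
by rewrite e2 -natr1; field.
Qed.

Theorem theorem4 (R : realType) (T : finType) (E : {set {set T}}) (n : nat)
    (hE : forall S, S \in E -> #|S| = 2%N) (hn : #|T| = n) :
  ((xc (@Pmatch R T E))%:R : R) <= ln (n%:R : R) * n%:R ^+ 3 * (3 / 2) ^+ n.
Proof.
have [n2|n1] := leqP 2 n.
- have n2' : (2 <= #|T|)%N by rewrite hn.
  have hx := @xc_le R _ _ _ (@main_ext R T E hE n2').
  rewrite hn in hx.
  set k := (2 ^ n./2 * maxn 1 #|E|)%N in hx.
  set C := 'C(n, 2).
  have eC : (#|E| <= C)%N.
    rewrite /C -hn -card_draws; apply: subset_leq_card; apply/subsetP => S SE.
    by rewrite inE hE.
  have C1 : (1 <= C)%N by rewrite /C bin_gt0.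
  have mC : (maxn 1 #|E| <= C)%N by rewrite geq_max C1 eC.
  have bnd : (k * #|E| + k * n <= 2 ^ n./2 * C * (C + n))%N.
    rewrite /k -mulnDr -mulnA -[X in (_ <= X)%N]mulnA.
    by apply: leq_mul => //; apply: leq_mul => //; rewrite leq_add2r.
  have hx2 := leq_trans hx bnd.
  apply: le_trans (_ : ((2 ^ n./2 * C * (C + n))%N%:R : R) <= _).
    by rewrite ler_nat.
  have eC2 : (C%:R : R) = n%:R * (n%:R - 1) / 2 by exact: binR.
  rewrite natrM natrM natrD natrX eC2.
  have -> : (n%:R * (n%:R - 1) / 2 + n%:R : R) = n%:R * (n%:R + 1) / 2 by field.
  exact: real_bound.
- have E0 : #|E| = 0%N.
    apply/eqP; rewrite cards_eq0; apply/eqP/setP => S; rewrite inE.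
    apply/negP => SE; have := hE S SE; have := max_card S; rewrite hn; lia.
  have ext : has_extension_with (@Pmatch R T E) 0.
    have := @ext_fin R #|E| (@Pmatch R T E) 'I_0 'I_0 'I_0 (fun _ _ => 0) (fun _ => 0)
      (fun _ _ => 0) (fun _ => 0) (fun _ _ => 0).
    rewrite card_ord; apply => x; split.
      move=> _; exists (fun _ => 0); split; try by case.
      by move=> r; exfalso; case: r => m; rewrite E0.
    move=> _; exists (fun M => if M == set0 then 1 else 0); split.
    + by move=> M; case: ifP.
    + move=> M nM; case: eqP => // e0; exfalso; move/negP: nM; apply.
      rewrite e0; apply/andP; split; first exact: sub0set.
      by apply/forallP => S; rewrite inE.
    + by rewrite (bigD1 set0) //= eqxx big1 ?addr0 // => M /negbTE ->.
    + by apply/matrixP => r; exfalso; case: r => m; rewrite E0.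
  have := @xc_le R _ _ _ ext; rewrite leqn0 => /eqP ->.
  have -> : ln (n%:R : R) = 0.
    case: n n1 {hn} => [|[|//]] _; first by rewrite ln0.
    by rewrite ln1.
  by rewrite !mul0r.
Qed.
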